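(* Let $n\ge1$, $D\ge1$, $r=\lceil\sqrt n\rceil$, and let $X_n=\{\mathbf{x}^0,\ldots,\mathbf{x}^{n-1}\}\subseteq\{0,1\}^D$ consist of $n$ pairwise distinct vectors, indexed so that $\mathbf{a}\cdot\mathbf{x}^0<\cdots<\mathbf{a}\cdot\mathbf{x}^{n-1}$ for some $\mathbf{a}\in\mathbb{Z}^D$. Then there is a five-layer Boolean threshold network with layer sizes $D$, $r+D$, $2r$, $rD$, $D$ that is a perfect autoencoder for $X_n$, with the third layer (of size $2r$) as middle layer.
   Context: A Boolean threshold function is a map $\{0,1\}^h\to\{0,1\}$, $\mathbf{u}\mapsto[\mathbf{w}\cdot\mathbf{u}\ge\theta]$ (value $1$ iff $\mathbf{w}\cdot\mathbf{u}\ge\theta$) with $\mathbf{w}\in\mathbb{Z}^h,\theta\in\mathbb{Z}$. An $L$-layer Boolean threshold network has layers $1,\ldots,L$; layer $1$ is the input; each node of layer $t+1$ computes a Boolean threshold function of the values of layer $t$. If layer $k$ is designated the middle layer, the encoder $\mathbf{f}$ is the map from layer $1$ values to layer $k$ values and the decoder $\mathbf{g}$ the map from layer $k$ values to layer $L$ values; the network is a perfect autoencoder for $X_n$ if $\mathbf{g}(\mathbf{f}(\mathbf{x}^i))=\mathbf{x}^i$ for all $i$. *)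

(* Defs.v *)
From mathcomp Require Import all_boot all_order all_algebra.
Set Implicit Arguments. Unset Strict Implicit. Unset Printing Implicit Defensive.
Import Order.TTheory GRing.Theory Num.Theory.
Local Open Scope ring_scope.

Definition bvec (h : nat) := 'I_h -> bool.

Definition bdot (h : nat) (w : 'I_h -> int) (u : bvec h) : int :=
  \sum_(i < h) w i * (nat_of_bool (u i))%:Z.

Definition threshold_fun (h : nat) (w : 'I_h -> int) (theta : int) (u : bvec h) : bool :=
  theta <= bdot w u.

Definition threshold_layer (h h' : nat) (F : bvec h -> bvec h') : Prop :=
  exists (W : 'I_h' -> 'I_h -> int) (Theta : 'I_h' -> int),
    forall (u : bvec h) (j : 'I_h'), F u j = threshold_fun (W j) (Theta j) u.

(* Main.v *)
Require Import Defs.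
From mathcomp Require Import all_boot all_order all_algebra.
Import Order.TTheory GRing.Theory Num.Theory.
Set Implicit Arguments. Unset Strict Implicit. Unset Printing Implicit Defensive.
Local Open Scope ring_scope.

Notation bz b := ((nat_of_bool b)%:Z).

Lemma sum_delta (m t : nat) (f : nat -> int) : (t < m)%N ->
  \sum_(k < m) (bz (k == t :> nat) * f k) = f t.
Proof.
move=> ht; rewrite (bigD1 (Ordinal ht)) //= eqxx mul1r big1 ?addr0 // => k hk.
case: eqP => [e|]; last by rewrite mul0r.
by move: hk; rewrite (_ : k = Ordinal ht) ?eqxx //; apply: val_inj.
Qed.

Lemma tele (r P : nat) (c : nat -> int) : (P < r)%N ->
  \sum_(p < r) ((c p.+1 - c p) * bz (p <= P)%N) = c P.+1 - c 0%N.
Proof.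
move=> hP; rewrite -(big_mkord xpredT (fun p => (c p.+1 - c p) * bz (p <= P)%N)).
rewrite (big_cat_nat _ (n:=P.+1)) //=.
have -> : \sum_(P.+1 <= i < r) (c i.+1 - c i) * bz (i <= P)%N = 0.
  rewrite big_nat_cond big1 // => i /andP[/andP[h _] _].
  by rewrite leqNgt h mulr0.
rewrite addr0 -(telescope_sumr c (leq0n P.+1)).
by apply: eq_big_nat => i /andP[_ hi]; rewrite ltnS in hi; rewrite hi mulr1.
Qed.

Lemma sum_split_nat (m k N : nat) (E : N = (m + k)%N) (F : nat -> int) :
  \sum_(i < N) F i = \sum_(i < m) F i + \sum_(i < k) F (m + i)%N.
Proof. by subst; rewrite big_split_ord. Qed.

Lemma bz_ge1 b : (1 <= bz b) = b.
Proof. by case: b. Qed.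

Definition Tv N E (x : 'I_N.+1 -> bvec E.+1) (a : 'I_E.+1 -> int) (t : nat) : int :=
  if (t < N.+1)%N then bdot a (x (inord t)) else bdot a (x ord_max) + 1.
Definition xn N E (x : 'I_N.+1 -> bvec E.+1) (t k : nat) : bool :=
  (t < N.+1)%N && x (inord t) (inord k).

Lemma le_mono N E (x : 'I_N.+1 -> bvec E.+1) (a : 'I_E.+1 -> int) :
  (forall i j : 'I_N.+1, (i < j)%N -> bdot a (x i) < bdot a (x j)) ->
  forall i j : 'I_N.+1, (bdot a (x j) <= bdot a (x i)) = (j <= i)%N.
Proof.
move=> ha i j; case: (leqP j i) => h.
  move: h; rewrite leq_eqVlt => /orP[/eqP e|h].
    by rewrite (ord_inj e) lexx.
  exact: ltW (ha _ _ h).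
by rewrite leNgt ha.
Qed.

Lemma Tv_le N E (x : 'I_N.+1 -> bvec E.+1) (a : 'I_E.+1 -> int) :
  (forall i j : 'I_N.+1, (i < j)%N -> bdot a (x i) < bdot a (x j)) ->
  forall (i : 'I_N.+1) t, (Tv x a t <= bdot a (x i)) = (t <= i)%N.
Proof.
move=> ha i t; rewrite /Tv; case: ifP => ht.
  by rewrite (le_mono ha) inordK.
have hi : (i < t)%N by apply: (leq_trans (ltn_ord i)); rewrite leqNgt ht.
rewrite leqNgt hi /=; apply/negbTE; rewrite -ltNge.
apply: (le_lt_trans (y := bdot a (x ord_max))); last by rewrite ltrDl.
by rewrite (le_mono ha) -ltnS.
Qed.

Lemma xn_val N E (x : 'I_N.+1 -> bvec E.+1) (i : 'I_N.+1) (k : 'I_E.+1) :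
  xn x i k = x i k.
Proof. by rewrite /xn ltn_ord /= !inord_val. Qed.


Definition W1 E r (a : 'I_E.+1 -> int) (j : 'I_(r + E.+1)) : 'I_E.+1 -> int :=
  if (j < r)%N then a else (fun k => bz (k == (j - r)%N :> nat)).
Definition Th1 N E r (x : 'I_N.+1 -> bvec E.+1) a (j : 'I_(r + E.+1)) : int :=
  if (j < r)%N then Tv x a (r * j) else 1.
Definition F1 N E r x a (u : bvec E.+1) : bvec (r + E.+1) :=
  fun j => threshold_fun (@W1 E r a j) (@Th1 N E r x a j) u.
Definition g2 N E r (x : 'I_N.+1 -> bvec E.+1) (i j : nat) : bool :=
  if (j < r)%N then (r * j <= i)%N else xn x i (j - r)%N.

Lemma L1 N E r x a : (forall i j : 'I_N.+1, (i < j)%N -> bdot a (x i) < bdot a (x j)) ->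
  forall (i : 'I_N.+1) (j : 'I_(r + E.+1)), @F1 N E r x a (x i) j = g2 r x i j.
Proof.
move=> ha i j; rewrite /F1 /threshold_fun /W1 /Th1 /g2; case: ifP => hj.
  by rewrite Tv_le.
rewrite /bdot; under eq_bigr => k _ do rewrite -xn_val.
rewrite (sum_delta (fun k => bz (xn x i k))) ?bz_ge1 //.
by rewrite ltn_subLR // leqNgt hj.
Qed.

Definition cq N E r (x : 'I_N.+1 -> bvec E.+1) a (q p : nat) : int :=
  if p is p'.+1 then Tv x a (r * p' + q) else 0.
Definition W2 N E r x a (m : 'I_(2 * r)) : 'I_(r + E.+1) -> int :=
  if (m < r)%N then (fun i' => bz (i' == m :> nat))
  else (fun i' => if (i' < r)%N then - (@cq N E r x a (m - r) i'.+1 - @cq N E r x a (m - r) i')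
                  else a (inord (i' - r))).
Definition Th2 r (m : 'I_(2 * r)) : int := if (m < r)%N then 1 else 0.
Definition F2 N E r x a (u : bvec (r + E.+1)) : bvec (2 * r) :=
  fun m => threshold_fun (@W2 N E r x a m) (Th2 m) u.
Definition g3 r (i m : nat) : bool :=
  if (m < r)%N then (m <= i %/ r)%N else (m - r <= i %% r)%N.

Lemma L2 N E r x a : (0 < r)%N -> (N.+1 <= r ^ 2)%N ->
  (forall i j : 'I_N.+1, (i < j)%N -> bdot a (x i) < bdot a (x j)) ->
  forall (i : 'I_N.+1) (m : 'I_(2 * r)), @F2 N E r x a (@F1 N E r x a (x i)) m = g3 r i m.
Proof.
move=> hr hn ha i m.
have hP : (i %/ r < r)%N by rewrite ltn_divLR // (leq_trans (ltn_ord i)) // -mulnn.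
rewrite /F2 /threshold_fun /W2 /Th2 /g3 /bdot.
under eq_bigr => j _ do rewrite L1 //.
case: ifP => hm.
  rewrite (sum_delta (fun t => bz (g2 r x i t))) ?bz_ge1; last first.
    by rewrite (leq_trans hm) // leq_addr.
  by rewrite /g2 hm leq_divRL // mulnC.
rewrite (sum_split_nat (m := r) (k := E.+1) erefl
  (fun t => (if (t < r)%N then - (@cq N E r x a (m - r) t.+1 - @cq N E r x a (m - r) t)
                  else a (inord (t - r))) * bz (g2 r x i t))).
under eq_bigr => p _ do rewrite ltn_ord /g2 ltn_ord [(r * _)%N]mulnC -leq_divRL // mulNr.
under [X in _ + X]eq_bigr => k _ do rewrite /g2 ltnNge leq_addr /= addKn inord_val xn_val.
rewrite sumrN tele // /cq /= addrC subr0 subr_ge0 Tv_le //.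
by rewrite {2}(divn_eq i r) mulnC leq_add2l.
Qed.

Definition ee (p t : nat) : int := bz (t == p.+1).
Definition bq N E r (x : 'I_N.+1 -> bvec E.+1) (p k q : nat) : int :=
  if q is q'.+1 then bz (xn x (r * p + q') k) else 0.
Definition W3 N E r x (j : 'I_(r * E.+1)) : 'I_(2 * r) -> int :=
  fun m => if (m < r)%N then ee (j %/ E.+1)%N m.+1 - ee (j %/ E.+1)%N m
           else @bq N E r x (j %/ E.+1)%N (j %% E.+1)%N (m - r)%N.+1
                - @bq N E r x (j %/ E.+1)%N (j %% E.+1)%N (m - r)%N.
Definition F3 N E r x (u : bvec (2 * r)) : bvec (r * E.+1) :=
  fun j => threshold_fun (@W3 N E r x j) 2 u.
Definition g4 N E r (x : 'I_N.+1 -> bvec E.+1) (i j : nat) : bool :=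
  ((i %/ r)%N == (j %/ E.+1)%N) && xn x (r * (j %/ E.+1) + i %% r)%N (j %% E.+1)%N.

Lemma L3 N E r x a : (0 < r)%N -> (N.+1 <= r ^ 2)%N ->
  (forall i j : 'I_N.+1, (i < j)%N -> bdot a (x i) < bdot a (x j)) ->
  forall (i : 'I_N.+1) (j : 'I_(r * E.+1)),
    @F3 N E r x (@F2 N E r x a (@F1 N E r x a (x i))) j = g4 r x i j.
Proof.
move=> hr hn ha i j.
have hP : (i %/ r < r)%N by rewrite ltn_divLR // (leq_trans (ltn_ord i)) // -mulnn.
have hQ : (i %% r < r)%N by rewrite ltn_mod.
rewrite /F3 /threshold_fun /W3 /bdot.
under eq_bigr => m _ do rewrite L2 //.
rewrite (sum_split_nat (m := r) (k := r) (etrans (mul2n r) (esym (addnn r))) (fun t =>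
  (if (t < r)%N then ee (j %/ E.+1)%N t.+1 - ee (j %/ E.+1)%N t
           else @bq N E r x (j %/ E.+1)%N (j %% E.+1)%N (t - r)%N.+1
                - @bq N E r x (j %/ E.+1)%N (j %% E.+1)%N (t - r)%N) * bz (g3 r i t))).
under eq_bigr => p _ do rewrite ltn_ord /g3 ltn_ord.
under [X in _ + X]eq_bigr => q _ do rewrite /g3 ltnNge leq_addr /= addKn.
rewrite (@tele r _ (ee (j %/ E.+1)%N) hP) (@tele r _ (@bq N E r x (j %/ E.+1)%N (j %% E.+1)%N) hQ).
rewrite /ee /bq !subr0 eqSS /g4.
by case: (_ == _); case: (xn _ _ _).
Qed.

Definition W4 E r (k : 'I_E.+1) : 'I_(r * E.+1) -> int :=
  fun j => bz ((j %% E.+1)%N == k :> nat).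
Definition F4 E r (u : bvec (r * E.+1)) : bvec E.+1 :=
  fun k => threshold_fun (@W4 E r k) 1 u.

Lemma L4 N E r x a : (0 < r)%N -> (N.+1 <= r ^ 2)%N ->
  (forall i j : 'I_N.+1, (i < j)%N -> bdot a (x i) < bdot a (x j)) ->
  forall (i : 'I_N.+1) (k : 'I_E.+1),
    @F4 E r (@F3 N E r x (@F2 N E r x a (@F1 N E r x a (x i)))) k = x i k.
Proof.
move=> hr hn ha i k.
have hP : (i %/ r < r)%N by rewrite ltn_divLR // (leq_trans (ltn_ord i)) // -mulnn.
rewrite /F4 /threshold_fun /W4 /bdot.
under eq_bigr => j _ do rewrite L3 //.
have hj0 : (i %/ r * E.+1 + k < r * E.+1)%N.
  have h1 : (i %/ r * E.+1 + k < (i %/ r).+1 * E.+1)%N.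
    by rewrite mulSn [X in (_ < X)%N]addnC ltn_add2l.
  by apply: (leq_trans h1); rewrite leq_mul2r hP orbT.
rewrite (bigD1 (Ordinal hj0)) //= big1.
  rewrite /g4 addr0 modnMDl (modn_small (ltn_ord k)) divnMDl // (divn_small (ltn_ord k)) addn0 !eqxx /=.
  rewrite mulnC -divn_eq xn_val.
  by rewrite mul1r bz_ge1.
move=> j hj; rewrite /g4; case: eqP => [hk|_]; last by rewrite mul0r.
case: eqP => [hp|_]; last by rewrite /= mulr0.
move: hj; rewrite (_ : j = Ordinal hj0) ?eqxx //; apply: val_inj => /=.
by rewrite {1}(divn_eq j E.+1) hk hp.
Qed.

Theorem theorem19 (n D r : nat) (x : 'I_n -> bvec D) :
  (1 <= n)%N -> (1 <= D)%N ->
  (* r = ceil(sqrt n) : the unique natural with (r-1)^2 < n <= r^2 *)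
  ((r.-1) ^ 2 < n <= r ^ 2)%N ->
  (* pairwise distinct vectors *)
  (forall i j : 'I_n, (forall k, x i k = x j k) -> i = j) ->
  (* indexed in increasing order of a . x^i for some integer vector a *)
  (exists a : 'I_D -> int, forall i j : 'I_n, (i < j)%N -> (bdot a (x i) < bdot a (x j))%R) ->
  (* five-layer threshold network with sizes D, r+D, 2r, rD, D, middle layer 3 *)
  exists (F1 : bvec D -> bvec (r + D)) (F2 : bvec (r + D) -> bvec (2 * r))
         (F3 : bvec (2 * r) -> bvec (r * D)) (F4 : bvec (r * D) -> bvec D),
    [/\ threshold_layer F1, threshold_layer F2, threshold_layer F3,
        threshold_layer F4 &
        (* perfect autoencoder: decoder (F4 o F3) after encoder (F2 o F1) *)
        forall (i : 'I_n) (k : 'I_D), F4 (F3 (F2 (F1 (x i)))) k = x i k].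
Proof.
case: n x => [|N] x // _; case: D x => [|E] x // _ /andP[_ hn] _ [a ha].
have hr : (0 < r)%N by case: r hn.
exists (@F1 N E r x a), (@F2 N E r x a), (@F3 N E r x), (@F4 E r); split.
- by exists (@W1 E r a), (@Th1 N E r x a).
- by exists (@W2 N E r x a), (@Th2 r).
- by exists (@W3 N E r x), (fun _ => 2).
- by exists (@W4 E r), (fun _ => 1).
- by move=> i k; apply: L4.
Qed.
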